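(* Let $p>2$ be a prime and $d\geq 2$ an integer with $p-1=df$. Let $\omega$ be a fixed generator of $\mathbb{F}_p^*$, and for $i,j\in\mathbb{Z}/d\mathbb{Z}$ let $(i,j)=\#\{(u,v):0\leq u,v\leq f-1,\ 1+\omega^{du+i}\equiv\omega^{dv+j}\pmod p\}$ be the cyclotomic numbers of order $d$. Let $\theta=0$ if $f$ is even and $\theta=d/2$ if $f$ is odd. Let $a\in\mathbb{F}_p^*\setminus(\mathbb{F}_p^* )^d$ and $\alpha\equiv\mathrm{ind}_\omega(a)\pmod d$. Then $s_d(p,a)=2$ if $(\alpha+\theta,\theta)\neq0$, and otherwise \[ s_d(p,a)=\min\{s\mid \exists\,0\leq i_2,\dots,i_{s-1}\leq d-1:\ (\alpha+\theta,i_2)(i_2,i_3)\cdots(i_{s-1},\theta)\neq0\}. \]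
   Context: For $a\in\mathbb{F}_p^*$, $s_d(p,a)=\min\{k\mid a=\sum_{i=1}^k a_i^d,\ a_i\in\mathbb{F}_p^*\}$. $\mathrm{ind}_\omega(a)$ is the discrete logarithm of $a$ to base $\omega$. Indices of cyclotomic numbers are taken modulo $d$. *)

(* Defs.v *)
From mathcomp Require Import all_boot all_algebra.
Set Implicit Arguments. Unset Strict Implicit. Unset Printing Implicit Defensive.
Import GRing.Theory.
Local Open Scope ring_scope.

Definition dsum_repr (p d k : nat) (a : 'F_p) : bool :=
  [exists t : k.-tuple 'F_p, all (fun x => x != 0) t && (a == \sum_(x <- t) x ^+ d)].

Lemma dsum_repr_ex (p d : nat) (a : 'F_p) : exists k, dsum_repr d k a.
Proof.
exists (nat_of_ord a); apply/existsP; exists (nseq_tuple (nat_of_ord a) (1 : 'F_p)).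
apply/andP; split.
  by apply/allP => x /nseqP [-> _]; rewrite oner_eq0.
rewrite /= big_nseq expr1n iter_addr addr0 natr_Zp //.
Qed.

Definition sd (p d : nat) (a : 'F_p) : nat := ex_minn (dsum_repr_ex d a).

Definition cyc (p d f : nat) (w : 'F_p) (i j : nat) : nat :=
  #|[set uv : 'I_f * 'I_f |
      1 + w ^+ (d * uv.1 + i %% d)%N == w ^+ (d * uv.2 + j %% d)%N]|.

Definition theta (d f : nat) : nat := if odd f then d./2 else 0%N.

Definition chain_ok (p d f : nat) (w : 'F_p) (start stop s : nat) : Prop :=
  (2 <= s)%N /\
  exists g : nat -> nat,
    [/\ g 1%N = start, g s = stop,
        (forall k, (2 <= k <= s.-1)%N -> (g k < d)%N) &
        (\prod_(1 <= k < s) cyc d f w (g k) (g k.+1) != 0)%N].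

(* Main.v *)
Require Import Defs.
From mathcomp Require Import all_boot all_algebra all_field.
From mathcomp Require Import zify ring.
Import GRing.Theory.
Local Open Scope ring_scope.

Definition inC {p : nat} (d : nat) (w x : 'F_p) (i : nat) :=
  exists b : 'F_p, b != 0 /\ x = b ^+ d * w ^+ i.

Lemma fermat1 {p : nat} {x : 'F_p} : prime p -> x != 0 -> x ^+ p.-1 = 1.
Proof.
move=> pp x0; have : x ^+ (p.-1).+1 = x.
  by rewrite prednK ?prime_gt0 // -{2}(expf_card x) card_Fp.
rewrite exprSr => H; apply: (mulIf x0); by rewrite mul1r.
Qed.

Lemma w_neq0 {p : nat} {w : 'F_p} : prime p -> p.-1.-primitive_root w -> w != 0.
Proof.
move=> pp hw; apply/eqP => w0; have := prim_expr_order hw; rewrite w0 expr0n.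
have : (p.-1 != 0)%N by have := prime_gt1 pp; lia.
by move/negPf => -> /eqP; rewrite eq_sym oner_eq0.
Qed.

Lemma gen_ex {p : nat} {w x : 'F_p} : prime p -> p.-1.-primitive_root w -> x != 0 ->
  exists e : nat, x = w ^+ e.
Proof.
move=> pp hw x0; have [i ->] := prim_rootP hw (fermat1 pp x0); by exists i.
Qed.

Lemma inC_mod {p : nat} (d : nat) (w x : 'F_p) i : w != 0 -> inC d w x i <-> inC d w x (i %% d).
Proof.
move=> w0; have E : w ^+ i = (w ^+ (i %/ d)) ^+ d * w ^+ (i %% d).
  by rewrite -exprM -exprD -divn_eq.
split=> [[b [b0 ->]]|[b [b0 ->]]].
  exists (b * w ^+ (i %/ d)); split; first by rewrite mulf_neq0 // expf_neq0.
  by rewrite E exprMn mulrA.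
have E2 : b ^+ d * w ^+ (i %% d) = (b / w ^+ (i %/ d)) ^+ d * w ^+ i.
  rewrite E expr_div_n; field; by rewrite !expf_neq0.
exists (b / w ^+ (i %/ d)); split => //.
by rewrite mulf_neq0 // invr_eq0 expf_neq0.
Qed.

Lemma inC_mul {p : nat} {d : nat} {w x y : 'F_p} {i j} : inC d w x i -> inC d w y j -> inC d w (x * y) (i + j).
Proof.
move=> [b [b0 ->]] [c [c0 ->]]; exists (b * c); split; first by rewrite mulf_neq0.
by rewrite exprMn exprD; ring.
Qed.

Lemma inC_scale {p : nat} {d : nat} {w x y : 'F_p} {i} : w != 0 -> inC d w x i -> inC d w y i ->
  exists q, q != 0 /\ y = q ^+ d * x.
Proof.
move=> w0 [b [b0 ->]] [c [c0 ->]]; exists (c / b); split; first by rewrite mulf_neq0 // invr_eq0.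
rewrite expr_div_n; field; by rewrite expf_neq0.
Qed.

Lemma inC_neq0 {p : nat} {d : nat} {w x : 'F_p} {i} : w != 0 -> inC d w x i -> x != 0.
Proof. by move=> w0 [b [b0 ->]]; rewrite mulf_neq0 // expf_neq0. Qed.

Lemma inC_uniq {p : nat} (d f : nat) (w x : 'F_p) i j : prime p -> p.-1 = (d * f)%N ->
  p.-1.-primitive_root w -> inC d w x i -> inC d w x j -> (i %% d = j %% d)%N.
Proof.
move=> pp hpf hw [b [b0 ->]] [c [c0 E]].
have w0 := w_neq0 pp hw.
have q0 : c / b != 0 by rewrite mulf_neq0 // invr_eq0.
have [e He] := gen_ex pp hw q0.
have : w ^+ i == w ^+ (e * d + j).
  rewrite exprD exprM -He expr_div_n -[w ^+ i](mulKf (expf_neq0 d b0)) E.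
  by apply/eqP; field; rewrite expf_neq0.
rewrite (eq_prim_root_expr hw) hpf => /eqP H.
have dd : (d %| d * f)%N by apply: dvdn_mulr.
by rewrite -(modn_dvdm i dd) H (modn_dvdm _ dd) modnMDl.
Qed.

Lemma cycP {p : nat} (d f : nat) (w : 'F_p) i j : prime p -> p.-1 = (d * f)%N ->
  p.-1.-primitive_root w -> (0 < f)%N ->
  (cyc d f w i j != 0)%N <-> exists x, inC d w x i /\ inC d w (1 + x) j.
Proof.
move=> pp hpf hw f0; have w0 := w_neq0 pp hw.
split.
  rewrite -lt0n card_gt0 => /set0Pn [[u v]]; rewrite inE /= => /eqP E.
  exists (w ^+ (d * u + i %% d)); split.
    apply/(inC_mod d w _ i w0); exists (w ^+ u); split; first by rewrite expf_neq0.
    by rewrite exprD mulnC exprM.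
  rewrite E; apply/(inC_mod d w _ j w0); exists (w ^+ v); split; first by rewrite expf_neq0.
  by rewrite exprD mulnC exprM.
move=> [x [Hx H1]].
move/(inC_mod d w x i w0): Hx => [b [b0 Ex]].
move/(inC_mod d w _ j w0): H1 => [c [c0 E1]].
have [e Eb] := gen_ex pp hw b0.
have [e' Ec] := gen_ex pp hw c0.
have Hb : forall e, (w ^+ e) ^+ d = w ^+ (d * (e %% f)).
  move=> k; rewrite -exprM; apply/eqP; rewrite (eq_prim_root_expr hw) hpf muln_modr modn_mod.
  by rewrite [(k * d)%N]mulnC.
rewrite -lt0n card_gt0; apply/set0Pn.
exists (Ordinal (ltn_pmod e f0), Ordinal (ltn_pmod e' f0)); rewrite inE /=.
by rewrite !exprD -!Hb -Eb -Ec -Ex -E1.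
Qed.

Lemma neg1C {p : nat} (d f : nat) (w : 'F_p) : prime p -> (2 < p)%N -> p.-1 = (d * f)%N ->
  p.-1.-primitive_root w -> inC d w (-1) (theta d f).
Proof.
move=> pp p2 hpf hw; have w0 := w_neq0 pp hw.
have op : odd p by case: (even_prime pp) => // E; rewrite E in p2.
have ep : ~~ odd p.-1 by move: op; rewrite -{1}(prednK (prime_gt0 pp)) /=; case: odd.
set h := (p.-1)./2.
have Eh : p.-1 = (h * 2)%N by rewrite -{1}(odd_double_half p.-1) (negPf ep) add0n -muln2.
have z1 : (w ^+ h) ^+ 2 = 1 by rewrite -exprM -Eh (prim_expr_order hw).
have zn1 : w ^+ h != 1.
  rewrite -(expr0 w) (eq_prim_root_expr hw) mod0n modn_small; last by lia.
  have := prime_gt1 pp; lia.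
have zm : w ^+ h = -1.
  by move/eqP: z1; rewrite sqrf_eq1 (negPf zn1) /= => /eqP.
rewrite -zm /theta.
have := odd_double_half f; have := odd_double_half d.
case: ifP => hf.
  have od : odd d = false by move: ep; rewrite hpf oddM hf andbT; case: odd.
  rewrite od /= ?add0n -!muln2 => Ed Ef.
  exists (w ^+ f./2); split; first by rewrite expf_neq0.
  rewrite -exprM -exprD; congr (_ ^+ _); nia.
rewrite /= ?add0n -!muln2 => Ed Ef.
exists (w ^+ f./2); split; first by rewrite expf_neq0.
rewrite -exprM -exprD; congr (_ ^+ _); nia.
Qed.

Definition Rel {p : nat} (d : nat) (w : 'F_p) i j :=
  exists x, inC d w x i /\ inC d w (1 + x) j.

Definition chainR {p : nat} (d : nat) (w : 'F_p) (g : nat -> nat) s :=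
  forall k, (1 <= k < s)%N -> Rel d w (g k) (g k.+1).

Lemma R_rev {p : nat} (d f : nat) (w : 'F_p) i j : prime p -> (2 < p)%N -> p.-1 = (d * f)%N ->
  p.-1.-primitive_root w -> Rel d w i j -> Rel d w (j + theta d f) (i + theta d f).
Proof.
move=> pp p2 hpf hw [x [Hx H1]]; have n1 := neg1C d f w pp p2 hpf hw.
exists (- (1 + x)); split.
  by have := inC_mul n1 H1; rewrite mulN1r addnC.
have -> : 1 - (1 + x) = -x by rewrite opprD addrA subrr add0r.
by have := inC_mul n1 Hx; rewrite mulN1r addnC.
Qed.

Lemma R_mod {p : nat} (d : nat) (w : 'F_p) i j i' j' : w != 0 ->
  (i %% d = i' %% d)%N -> (j %% d = j' %% d)%N -> Rel d w i j -> Rel d w i' j'.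
Proof.
move=> w0 hi hj [x [Hx H1]]; exists x; split.
  by apply/(inC_mod d w x i' w0); rewrite -hi; apply/(inC_mod d w x i w0).
by apply/(inC_mod d w _ j' w0); rewrite -hj; apply/(inC_mod d w _ j w0).
Qed.

Lemma build {p : nat} (d : nat) (w : 'F_p) : w != 0 -> forall s g, (1 <= s)%N ->
  inC d w 1 (g 1%N) -> chainR d w g s ->
  exists t : seq 'F_p, [/\ size t = s, all (fun x => x != 0) t &
     inC d w (\sum_(x <- t) x ^+ d) (g s)].
Proof.
move=> w0; elim=> [//|s IH] g _ h1 hc.
case: (posnP s) => [s0|sp].
  subst s; exists [:: 1]; split => //.
  by rewrite big_seq1 expr1n.
have [t [ht at_ [b [b0 Eb]]]] := IH g sp h1 (fun k hk => hc k (ltac:(lia))).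
have [x [[b1 [b10 Ex]] [b2 [b20 E1]]]] := hc s (ltac:(lia)).
exists ((b / b1) :: t); split => /=; first by rewrite ht.
  by rewrite at_ andbT mulf_neq0 // invr_eq0.
rewrite big_cons Eb; exists (b / b1 * b2); split; first by rewrite !mulf_neq0 // invr_eq0.
rewrite [(b / b1 * b2) ^+ d]exprMn -mulrA -E1 Ex expr_div_n; field; by rewrite expf_neq0.
Qed.

Lemma decomp {p : nat} (d : nat) (w : 'F_p) : prime p -> p.-1.-primitive_root w ->
  forall t : seq 'F_p, all (fun x => x != 0) t -> forall c,
  inC d w (\sum_(x <- t) x ^+ d) c ->
  exists m g, [/\ (1 <= m <= size t)%N, inC d w 1 (g 1%N), g m = c & chainR d w g m].
Proof.
move=> pp hw; have w0 := w_neq0 pp hw.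
elim=> [|x t IH] /=.
  by move=> _ c; rewrite big_nil => /(inC_neq0 w0); rewrite eqxx.
move=> /andP [x0 ht] c; rewrite big_cons => Hc.
have xd0 : x ^+ d != 0 by rewrite expf_neq0.
case: (eqVneq (\sum_(y <- t) y ^+ d) 0) => S0.
  rewrite S0 addr0 in Hc; exists 1%N, (fun _ => c); split => //.
    move: Hc => [b [b0 E]]; exists (b / x); split; first by rewrite mulf_neq0 // invr_eq0.
    by rewrite expr_div_n mulrAC -E divff.
  by move=> k; lia.
have [e Ee] := gen_ex pp hw S0.
have [m [g [hm h1 hg hc]]] := IH ht e (ltac:(exists 1; split; [by rewrite oner_eq0 | by rewrite expr1n mul1r])).
exists m.+1, (fun k => if k == m.+1 then c else g k); split.
- by move: hm; lia.
- by have -> : (1 == m.+1) = false by apply/eqP; lia.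
- by rewrite eqxx.
move=> k hk; have -> : (k == m.+1) = false by apply/eqP; lia.
case: (eqVneq k m) => [->|km]; last first.
  have -> : (k.+1 == m.+1) = false by rewrite eqSS; apply/negbTE.
  apply: hc; lia.
rewrite eqxx hg.
exists ((\sum_(y <- t) y ^+ d) / x ^+ d); split.
  exists x^-1; split; first by rewrite invr_eq0.
  by rewrite exprVn Ee mulrC.
move: Hc => [b [b0 E]]; exists (b / x); split; first by rewrite mulf_neq0 // invr_eq0.
rewrite expr_div_n mulrAC -E; field; by rewrite expf_neq0.
Qed.

Lemma mkrepr {p : nat} (d : nat) (w a : 'F_p) s g : w != 0 -> (1 <= s)%N ->
  inC d w 1 (g 1%N) -> chainR d w g s -> inC d w a (g s) -> dsum_repr d s a.
Proof.
move=> w0 s1 h1 hc ha.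
have [t [ht at_ hS]] := build d w w0 s g s1 h1 hc.
have [q [q0 Ea]] := inC_scale w0 hS ha.
have Hs : size (map (fun x => q * x) t) == s by rewrite size_map ht.
apply/existsP; exists (Tuple Hs); apply/andP; split.
  rewrite /= all_map; apply/allP => y hy /=; rewrite mulf_neq0 //.
  exact: (allP at_ y hy).
rewrite /= big_map Ea mulr_sumr; apply/eqP/eq_bigr => y _; by rewrite exprMn.
Qed.

Theorem theorem1 (p d f : nat) (w a : 'F_p) (alpha : nat) :
  prime p -> (2 < p)%N -> (2 <= d)%N -> p.-1 = (d * f)%N ->
  (p.-1).-primitive_root w ->
  a != 0 -> ~ (exists b : 'F_p, b != 0 /\ b ^+ d = a) ->
  (exists e : nat, w ^+ e = a /\ e = alpha %[mod d]) ->
  ((cyc d f w (alpha + theta d f) (theta d f) != 0)%N -> sd d a = 2%N) /\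
  (cyc d f w (alpha + theta d f) (theta d f) = 0%N ->
     chain_ok d f w (alpha + theta d f) (theta d f) (sd d a) /\
     forall s, chain_ok d f w (alpha + theta d f) (theta d f) s -> (sd d a <= s)%N).
Proof.
move=> pp p2 d2 hpf hw a0 nD [e [Ea He]].
have w0 := w_neq0 pp hw.
have d0 : (0 < d)%N by lia.
have f0 : (0 < f)%N by move: hpf p2; case: f => [|//]; rewrite muln0; lia.
have haC : inC d w a alpha.
  apply/(inC_mod d w a alpha w0); rewrite -He; apply/(inC_mod d w a e w0).
  by exists 1; rewrite expr1n mul1r Ea oner_eq0.
set th := theta d f.
have n1 : inC d w (-1) th := neg1C d f w pp p2 hpf hw.
have one2 : inC d w 1 (th + th) by have := inC_mul n1 n1; rewrite mulrNN mulr1.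
have minimal : forall s, chain_ok d f w (alpha + th) th s -> (sd d a <= s)%N.
  move=> s [s2 [g [g1 gs _ hprod]]].
  have hc : chainR d w (fun k => g (s.+1 - k) + th)%N s.
    move=> k hk /=.
    have := hprod; rewrite -lt0n big_nat_cond => /gt0_prodn_seq H.
    have := H (s - k)%N; rewrite mem_index_iota andbT.
    have hk' : (1 <= s - k < s)%N by lia.
    move=> /(_ hk' hk'); rewrite lt0n => /(cycP d f w _ _ pp hpf hw f0) R.
    have := R_rev d f w _ _ pp p2 hpf hw R.
    have -> : (s.+1 - k = (s - k).+1)%N by lia.
    by have -> : (s.+1 - k.+1 = s - k)%N by lia.
  have Hd : dsum_repr d s a.
    apply: (mkrepr d w a _ _ w0 _ _ hc); first by lia.
      by rewrite subSS subn0 gs.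
    have -> : (s.+1 - s = 1)%N by lia.
    by rewrite g1; have := inC_mul haC one2; rewrite mulr1 addnA.
  by rewrite /sd; case: ex_minnP => m _ Hm; exact: Hm.
have exist : chain_ok d f w (alpha + th) th (sd d a).
  rewrite /sd; case: ex_minnP => m Hm Hmin.
  move/existsP: Hm => [t /andP [at_ /eqP Ea']].
  have Hsum : inC d w (\sum_(x <- t) x ^+ d) alpha by rewrite -Ea'.
  have [m' [g [hm h1 hg hc]]] := decomp d w pp hw t at_ alpha Hsum.
  rewrite size_tuple in hm.
  have m'm : m' = m.
    apply/eqP; rewrite eqn_leq; move: (hm) => /andP [_ ->] /=.
    apply: Hmin; apply: (mkrepr d w a _ _ w0 _ h1 hc); first by move: hm => /andP [].
    by rewrite hg.
  subst m'.
  have m2 : (2 <= m)%N.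
    case: (ltnP 1 m) => // m1; have m1' : m = 1%N by move: hm; lia.
    subst m; exfalso; apply: nD; rewrite hg in h1.
    have [q [q0 ->]] := inC_scale w0 h1 haC; exists q; split => //; by rewrite mulr1.
  have g1mod : (g 1 %% d = 0)%N.
    have := inC_uniq d f w 1 (g 1%N) 0 pp hpf hw h1 (ltac:(exists 1; split; [by rewrite oner_eq0 | by rewrite expr1n mul1r expr0])).
    by rewrite mod0n.
  split => //.
  pose h := fun k => if k == 1%N then (alpha + th)%N else if k == m then th else ((g (m.+1 - k) + th) %% d)%N.
  have hmod : forall k, (1 <= k <= m)%N -> (h k %% d = (g (m.+1 - k) + th) %% d)%N.
    move=> k hk; rewrite /h; case: (eqVneq k 1%N) => [->|k1].
      by rewrite subSS subn0 hg.
    case: (eqVneq k m) => [->|km]; last by rewrite modn_mod.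
    have -> : (m.+1 - m = 1)%N by lia.
    by rewrite -modnDml g1mod add0n.
  exists h; split.
  - by rewrite /h eqxx.
  - by rewrite /h eqxx; have -> : (m == 1%N) = false by apply/eqP; lia.
  - move=> k hk; rewrite /h.
    have -> : (k == 1%N) = false by apply/eqP; lia.
    have -> : (k == m) = false by apply/eqP; lia.
    exact: ltn_pmod.
  rewrite -lt0n big_nat_cond; apply: prodn_cond_gt0 => k /andP [hk _]; rewrite lt0n.
  apply/(cycP d f w _ _ pp hpf hw f0).
  apply: (R_mod d w _ _ _ _ w0 (esym (hmod k _)) (esym (hmod k.+1 _))); try lia.
  have := R_rev d f w _ _ pp p2 hpf hw (hc (m - k)%N (ltac:(lia))).
  have -> : (m.+1 - k = (m - k).+1)%N by lia.
  by have -> : (m.+1 - k.+1 = m - k)%N by lia.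
split; last by move=> _; split.
move=> hne; apply/eqP; rewrite eqn_leq; apply/andP; split; last by case: exist.
apply: minimal; split => //.
exists (fun k => if k == 1%N then (alpha + th)%N else th); split => //.
  by move=> k; lia.
by rewrite big_nat1 /=.
Qed.
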